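(* Let $\mathcal H$ be a Hilbert space, $(\mathsf H_t)_{t\ge0}$ a strongly continuous semigroup of symmetric operators on $\mathcal H$, $L$ its generator with domain $\mathcal D(L)$, and $\mathbb H_t(u)=(\mathsf H_tu,u)_{\mathcal H}$. Then: (i) if $u\in\mathcal D(L)$, then $\limsup_{t\to0^+}\frac{\mathbb H_0(u)-\mathbb H_t(u)}{t}\le(-Lu,u)_{\mathcal H}$; (ii) if $(t_k)\subset(0,\infty)$ is infinitesimal and $(u_k)\subset\mathcal H$ satisfies $u_k\to u$ in $\mathcal H$ for some $u\in\mathcal D(L)$, then $\liminf_{k\to\infty}\frac{\mathbb H_0(u_k)-\mathbb H_{t_k}(u_k)}{t_k}\ge(-Lu,u)_{\mathcal H}$. Consequently, the functionals $u\mapsto\frac{\mathbb H_0(u)-\mathbb H_t(u)}{t}$ converge as $t\to0^+$ to $u\mapsto(-Lu,u)_{\mathcal H}$ on $\mathcal D(L)$ pointwise and in the $\Gamma$-sense with respect to the strong topology of $\mathcal H$.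
   Context: A strongly continuous semigroup of symmetric operators on $\mathcal H$ is a family $(\mathsf H_t)_{t\ge0}$ of bounded self-adjoint operators with $\mathsf H_0=\mathrm{Id}$, $\mathsf H_{t+s}=\mathsf H_t\mathsf H_s$, $\|\mathsf H_tu\|\le\|u\|$, and $\mathsf H_tu\to u$ as $t\to0^+$ for every $u$. The generator is $Lu=\lim_{t\to0^+}(\mathsf H_tu-u)/t$ (strong limit), with $\mathcal D(L)$ the set of $u$ for which the limit exists. $\Gamma$-convergence on $\mathcal D(L)$: for every infinitesimal $(t_k)$, the liminf inequality of (ii) holds, and for every $u\in\mathcal D(L)$ there are $u_k\in\mathcal D(L)$, $u_k\to u$, with $\limsup$ of the functionals at $(t_k,u_k)$ at most $(-Lu,u)_{\mathcal H}$. *)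

(* Defs.v *)
From HB Require Import structures.
From mathcomp Require Import all_boot all_order all_algebra.
From mathcomp Require Import all_classical all_reals all_analysis.
Set Implicit Arguments. Unset Strict Implicit. Unset Printing Implicit Defensive.
Import Order.TTheory GRing.Theory Num.Theory.
Import numFieldNormedType.Exports.
Local Open Scope classical_set_scope.
Local Open Scope ring_scope.

(* A real inner product on a normed space V whose norm is the induced one.
   Together with completeness of V (completeNormedModType) this makes V a
   real Hilbert space. *)
Definition is_inner_product (R : realType) (V : normedModType R)
    (ip : V -> V -> R) : Prop :=
  [/\ (forall x y, ip x y = ip y x),
      (forall (a : R) x y z, ip (a *: x + y) z = a * ip x z + ip y z)
    & (forall x, ip x x = `|x| ^+ 2)].

(* Strongly continuous semigroup of symmetric (self-adjoint) bounded
   operators (H t)_{t >= 0}; only the values H t for t >= 0 matter. *)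
Definition sym_semigroup (R : realType) (V : normedModType R)
    (ip : V -> V -> R) (H : R -> V -> V) : Prop :=
  [/\ (forall t, 0 <= t -> forall (a : R) x y, H t (a *: x + y) = a *: H t x + H t y),
      (forall t, 0 <= t -> forall u v, ip (H t u) v = ip u (H t v)),
      (forall u, H 0 u = u) /\
      (forall t s, 0 <= t -> 0 <= s -> forall u, H (t + s) u = H t (H s u)),
      (forall t, 0 <= t -> forall u, `|H t u| <= `|u|)
    & (forall u, H t u @[t --> 0^'+] --> u)].

Definition gen_quot (R : realType) (V : normedModType R) (H : R -> V -> V)
    (u : V) (t : R) : V := t^-1 *: (H t u - u).

Definition domL (R : realType) (V : normedModType R) (H : R -> V -> V) : set V :=
  [set u | cvg (gen_quot H u @ 0^'+)].

Definition genL (R : realType) (V : normedModType R) (H : R -> V -> V) (u : V) : V :=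
  lim (gen_quot H u @ 0^'+).

Definition bbH (R : realType) (V : normedModType R) (ip : V -> V -> R)
    (H : R -> V -> V) (t : R) (u : V) : R := ip (H t u) u.

Definition Ft (R : realType) (V : normedModType R) (ip : V -> V -> R)
    (H : R -> V -> V) (t : R) (u : V) : R :=
  (bbH ip H 0 u - bbH ip H t u) / t.

Definition gamma_conv_on (R : realType) (V : normedModType R)
    (F : R -> V -> R) (F0 : V -> R) (D : set V) : Prop :=
  forall tk : nat -> R, (forall k, 0 < tk k) -> tk @ \oo --> 0 ->
    (forall (uk : nat -> V) (u : V), D u -> uk @ \oo --> u ->
       (F0 u)%:E <= limn_einf (fun k => (F (tk k) (uk k))%:E))%E /\
    (forall u : V, D u -> exists uk : nat -> V,
       [/\ (forall k, D (uk k)), uk @ \oo --> u &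
           (limn_esup (fun k => (F (tk k) (uk k))%:E) <= (F0 u)%:E)%E]).

(* Main.v *)
Require Import Defs.
From HB Require Import structures.
From mathcomp Require Import all_boot all_order all_algebra.
From mathcomp Require Import all_classical all_reals all_analysis.
From mathcomp Require Import ring lra.
Import Order.TTheory GRing.Theory Num.Theory.
Import numFieldNormedType.Exports.
Local Open Scope classical_set_scope.
Local Open Scope ring_scope.

Section IP.
Set Implicit Arguments.
Variables (R : realType) (V : normedModType R) (ip : V -> V -> R).
Hypothesis hip : is_inner_product ip.

Lemma ipC x y : ip x y = ip y x. Proof. by case: hip. Qed.
Lemma ipL a x y z : ip (a *: x + y) z = a * ip x z + ip y z. Proof. by case: hip. Qed.
Lemma ipxx x : ip x x = `|x| ^+ 2. Proof. by case: hip. Qed.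
Lemma ipDl x y z : ip (x + y) z = ip x z + ip y z.
Proof. by have := ipL 1 x y z; rewrite scale1r mul1r. Qed.
Lemma ip0l z : ip 0 z = 0.
Proof. have := ipDl 0 0 z; rewrite addr0 => h; lra. Qed.
Lemma ipZl a x z : ip (a *: x) z = a * ip x z.
Proof. by have := ipL a x 0 z; rewrite addr0 ip0l addr0. Qed.
Lemma ipNl x z : ip (- x) z = - ip x z.
Proof. by rewrite -scaleN1r ipZl mulN1r. Qed.
Lemma ipBl x y z : ip (x - y) z = ip x z - ip y z.
Proof. by rewrite ipDl ipNl. Qed.
Lemma ipDr x y z : ip z (x + y) = ip z x + ip z y.
Proof. by rewrite ipC ipDl !(ipC z). Qed.
Lemma ipBr x y z : ip z (x - y) = ip z x - ip z y.
Proof. by rewrite ipC ipBl !(ipC z). Qed.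
Lemma ipNr x z : ip z (- x) = - ip z x.
Proof. by rewrite ipC ipNl ipC. Qed.

Lemma ip_polar x y : ip x y = (`|x + y| ^+ 2 - `|x - y| ^+ 2) / 4.
Proof.
rewrite -!ipxx !ipDl !ipNl !ipDr !ipNr (ipC y x).
by field.
Qed.

Lemma ip_cvg {T : Type} (F : set_system T) {FF : Filter F} (f g : T -> V) x y :
  f @ F --> x -> g @ F --> y -> (fun t => ip (f t) (g t)) @ F --> ip x y.
Proof.
move=> fx gy.
rewrite ip_polar; under eq_fun do rewrite ip_polar.
apply: cvgMr_tmp; apply: cvgB; rewrite expr2; under eq_fun do rewrite expr2.
- by apply: cvgM; apply: cvg_norm; apply: cvgD.
- by apply: cvgM; apply: cvg_norm; apply: cvgB.
Qed.
End IP.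
Lemma EFin_cvg {R : realType} {T : Type} (F : set_system T) {FF : Filter F}
  (g : T -> R) l : g @ F --> l -> (fun t => (g t)%:E) @ F --> l%:E.
Proof. by move=> h; apply: cvg_EFin => //; exact: nearW. Qed.

Lemma limf_esup_cvg_le {R : realType} (F : set_system R) {FF : Filter F}
  (g : R -> R) l : g @ F --> l -> (limf_esup (fun t => (g t)%:E) F <= l%:E)%E.
Proof.
move=> /cvgrPdist_le h; rewrite limf_esupE.
apply/lee_addgt0Pr => e e0.
apply: (@le_trans _ _ (ereal_sup ((fun t => (g t)%:E) @` [set t | g t <= l + e]))).
  apply: ereal_inf_lbound; exists [set t | g t <= l + e] => //.
  apply: filterS (h e e0) => t /=; rewrite ler_norml => /andP[h1 h2]; lra.
apply: ge_ereal_sup => _ [t /= ht <-]; by rewrite -EFinD lee_fin.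
Qed.

Lemma einf_ge {R : realType} (u v : nat -> R) (l : R) :
  (forall k, v k <= u k) -> v @ \oo --> l ->
  (l%:E <= limn_einf (fun k => (u k)%:E))%E.
Proof.
move=> vu /EFin_cvg/cvg_limn_einf_sup [<- _].
rewrite !limn_einf_lim; apply: lee_lim; [exact: is_cvg_einfs|exact: is_cvg_einfs|].
apply: nearW => n /=.
apply: le_ereal_inf_tmp => _ [m /= nm <-].
apply: (@le_trans _ _ (v m)%:E); last by rewrite lee_fin.
by apply: ereal_inf_lbound; exists m.
Qed.
Lemma seq_right {R : realType} (tk : nat -> R) :
  (forall k, 0 < tk k) -> tk @ \oo --> 0 -> tk @ \oo --> 0^'+.
Proof.
move=> pos cv A hA.
exact: (filterS (fun n (h : 0 < tk n -> A (tk n)) => h (pos n)) (cv _ hA)).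
Qed.
Section SG.
Set Implicit Arguments.
Variables (R : realType) (V : completeNormedModType R)
    (ip : V -> V -> R) (H : R -> V -> V).
Hypothesis hip : is_inner_product ip.
Hypothesis hs : sym_semigroup ip H.

Lemma H_lin t : 0 <= t -> forall a x y, H t (a *: x + y) = a *: H t x + H t y.
Proof. case: hs => h _ _ _ _; exact: h. Qed.
Lemma H_sym t : 0 <= t -> forall u v, ip (H t u) v = ip u (H t v).
Proof. case: hs => _ h _ _ _; exact: h. Qed.
Lemma H_0 u : H 0 u = u. Proof. case: hs => _ _ [h _] _ _; exact: h. Qed.
Lemma H_add t s : 0 <= t -> 0 <= s -> forall u, H (t + s) u = H t (H s u).
Proof. case: hs => _ _ [_ h] _ _; exact: h. Qed.
Lemma H_contr t : 0 <= t -> forall u, `|H t u| <= `|u|.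
Proof. case: hs => _ _ _ h _; exact: h. Qed.

Lemma H_B t : 0 <= t -> forall x y, H t (x - y) = H t x - H t y.
Proof.
move=> t0 x y.
have h0 : H t 0 = 0.
  have := @H_lin t t0 1 0 0; rewrite !scale1r !addr0.
  move/(congr1 (fun z => z - H t 0)); rewrite /= addrK subrr => h1.
  exact/esym.
have := @H_lin t t0 (-1) y x; rewrite !scaleN1r => h.
by rewrite (addrC x) h addrC.
Qed.

Lemma ip_H_le t : 0 <= t -> forall w, ip (H t w) w <= `|w| ^+ 2.
Proof.
move=> t0 w.
have t2 : 0 <= t / 2 by rewrite divr_ge0.
have -> : t = t / 2 + t / 2 by field.
rewrite H_add // H_sym // (ipxx hip) !expr2.
apply: ler_pM => //; exact: H_contr.
Qed.

Lemma Ft_eq t v : Ft ip H t v = ip (- gen_quot H v t) v.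
Proof.
rewrite /Ft /bbH /gen_quot H_0 (ipNl hip) (ipZl hip) (ipDl hip) (ipNl hip).
by rewrite mulrC; ring.
Qed.

Lemma key_ineq t u uk : 0 < t ->
  2 * ip (- gen_quot H u t) uk - Ft ip H t u <= Ft ip H t uk.
Proof.
move=> tp; have t0 := ltW tp.
have hq : 0 <= ip ((uk - u) - H t (uk - u)) (uk - u).
  rewrite (ipDl hip) (ipNl hip) (ipxx hip) subr_ge0; exact: ip_H_le.
rewrite H_B // in hq.
rewrite !(ipDl hip, ipNl hip, ipDr hip, ipNr hip) in hq.
rewrite (@H_sym t t0 uk u) (ipC hip uk (H t u)) (ipC hip uk u) in hq.
rewrite !Ft_eq /gen_quot.
rewrite !(ipDl hip, ipNl hip, ipZl hip).
have ti : 0 < t^-1 by rewrite invr_gt0.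
nra.
Qed.

End SG.

Theorem theorem1p8 (R : realType) (V : completeNormedModType R)
    (ip : V -> V -> R) (H : R -> V -> V) :
  is_inner_product ip -> sym_semigroup ip H ->
  [/\ (* (i) *)
      (forall u : V, domL H u ->
         (limf_esup (fun t => (Ft ip H t u)%:E) 0^'+ <= (ip (- genL H u) u)%:E)%E),
      (* (ii) *)
      (forall (tk : nat -> R) (uk : nat -> V) (u : V),
         (forall k, 0 < tk k) -> tk @ \oo --> 0 ->
         uk @ \oo --> u -> domL H u ->
         ((ip (- genL H u) u)%:E <= limn_einf (fun k => (Ft ip H (tk k) (uk k))%:E))%E),
      (* pointwise convergence on D(L) *)
      (forall u : V, domL H u ->
         Ft ip H t u @[t --> 0^'+] --> ip (- genL H u) u)
    & (* Gamma-convergence on D(L) *)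
      gamma_conv_on (Ft ip H) (fun u => ip (- genL H u) u) (domL H)].
Proof.
move=> hip hs.
have pw : forall u : V, domL H u ->
    Ft ip H t u @[t --> 0^'+] --> ip (- genL H u) u.
  move=> u hu; under eq_fun do rewrite (Ft_eq hip hs).
  apply: (ip_cvg hip); [exact: cvgN | exact: cvg_cst].
have liminf : forall (tk : nat -> R) (uk : nat -> V) (u : V),
         (forall k, 0 < tk k) -> tk @ \oo --> 0 ->
         uk @ \oo --> u -> domL H u ->
         ((ip (- genL H u) u)%:E <= limn_einf (fun k => (Ft ip H (tk k) (uk k))%:E))%E.
  move=> tk uk u tpos tcv ucv hu.
  have tr := seq_right tpos tcv.
  apply: (@einf_ge _ _ (fun k => 2 * ip (- gen_quot H u (tk k)) (uk k) - Ft ip H (tk k) u)).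
    by move=> k; apply: (key_ineq hip hs).
  have -> : ip (- genL H u) u = 2 * ip (- genL H u) u - ip (- genL H u) u by ring.
  apply: cvgB.
    apply: cvgMl_tmp; apply: (ip_cvg hip) => //.
    apply: cvgN; exact: (cvg_comp _ _ tr hu).
  exact: (cvg_comp _ _ tr (pw u hu)).
split => //.
- by move=> u hu; apply: limf_esup_cvg_le; exact: pw.
- move=> tk tpos tcv; split.
    by move=> uk u hu ucv; apply: liminf.
  move=> u hu; exists (fun _ => u); split => //; first exact: cvg_cst.
  have tr := seq_right tpos tcv.
  have h2 : (fun k => (Ft ip H (tk k) u)%:E) @ \oo --> (ip (- genL H u) u)%:E.
    apply: EFin_cvg; exact: (cvg_comp _ _ tr (pw u hu)).
  by have [_ ->] := cvg_limn_einf_sup h2.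
Qed.
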